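(* Let $V$ be an $N$-dimensional vector space over $\mathbb{F}_q$ and $\nu\ge N$. Let $\overline{Pr}_\nu(V)$ be the set of linear-isometry classes of projective weight functions $\operatorname{wt}_{\mathcal{F}}$ on $V$ with $\mathcal{F}$ a spanning projective point family of cardinality $\nu$, and let $\overline{\mathrm{Gr}}_{\nu-N}(\mathbb{F}_q^\nu)_{d_H\ge3}$ be the set of Hamming-equivalence classes of $(\nu-N)$-dimensional subspaces of $\mathbb{F}_q^\nu$ with minimum Hamming distance at least $3$. Then the map $\Psi$ sending the class of $\operatorname{wt}_{\mathcal{F}}$ to the Hamming-equivalence class of the parent codes of $\mathcal{F}$ is a well-defined bijection $\overline{Pr}_\nu(V)\to\overline{\mathrm{Gr}}_{\nu-N}(\mathbb{F}_q^\nu)_{d_H\ge3}$, whose inverse sends the class of a subspace $P$ to the class of the quotient weight $\operatorname{wt}_{\mathrm{quot},\varphi_P}$, where $\varphi_P:\mathbb{F}_q^\nu\to V$ is any linear map with kernel $P$ and $\mathbb{F}_q^\nu$ carries the Hamming weight.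
   Context: A projective point family in $V$ is a set $\mathcal{F}$ of pairwise linearly independent nonzero vectors (distinct $1$-dimensional subspaces); it is spanning if $\langle\mathcal{F}\rangle=V$. Its projective weight is $\operatorname{wt}_{\mathcal{F}}(x)=\min(\{|I|:I\subseteq\mathcal{F},x\in\langle I\rangle\}\cup\{\infty\})$. A parent function of $\mathcal{F}$ (with $|\mathcal{F}|=\nu$) is a linear map $\varphi:\mathbb{F}_q^\nu\to V$ with $\{\langle\varphi(e_i)\rangle\}_{i=1}^\nu=\mathcal{F}$; its kernel is a parent code of $\mathcal{F}$. Two weight functions $\operatorname{wt}_1,\operatorname{wt}_2$ on $V$ are linearly isometric if $\operatorname{wt}_1=\operatorname{wt}_2\circ L$ for some $L\in\mathrm{GL}(V)$. Subspaces $C_1,C_2\le\mathbb{F}_q^\nu$ are Hamming equivalent if $L(C_1)=C_2$ for some linear Hamming-weight-preserving map $L$ (i.e. a permutation composed with an invertible diagonal matrix). Quotient weight: $\operatorname{wt}_{\mathrm{quot},\psi}(y)=\min\{\operatorname{wt}_H(w):w\in\psi^{-1}(y)\}$. *)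

(* Defs.v *)
From HB Require Import structures.
From mathcomp Require Import all_boot all_order all_algebra.
Set Implicit Arguments. Unset Strict Implicit. Unset Printing Implicit Defensive.
Import GRing.Theory.
Local Open Scope ring_scope.

(* Model: V = 'rV[F]_N (an N-dimensional F-vector space), F a finite field F_q;
   F^nu = 'rV[F]_nu; linear maps are elements of 'Hom(_, _). *)

Section Defs.
Variable F : finFieldType.

Definition proj_point_family (N : nat) (Fam : {set 'rV[F]_N}) : Prop :=
  (forall v, v \in Fam -> v != 0) /\
  (forall u v, u \in Fam -> v \in Fam -> u != v -> free [:: u; v]).

Definition spanning (N : nat) (Fam : {set 'rV[F]_N}) : Prop :=
  (<<enum Fam>>%VS = fullv).

Definition spanning_ppf (N : nat) (Fam : {set 'rV[F]_N}) : Prop :=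
  proj_point_family Fam /\ spanning Fam.

(* projective weight: min |I|, I subset of Fam, x in span I.  The default
   value #|Fam| of the min is only reached when no such I exists (value
   "infinity"); it never occurs for spanning families. *)
Definition projwt (N : nat) (Fam : {set 'rV[F]_N}) (x : 'rV[F]_N) : nat :=
  \big[minn/#|Fam|]_(I : {set 'rV[F]_N} |
        (I \subset Fam) && (x \in <<enum I>>%VS)) #|I|.

Definition hamw (nu : nat) (w : 'rV[F]_nu) : nat := #|[set i | w 0 i != 0]|.

(* quotient weight of psi : F^nu -> V (F^nu with the Hamming weight); the
   default nu is only reached for y outside the image of psi. *)
Definition quotwt (nu N : nat) (psi : 'Hom('rV[F]_nu, 'rV[F]_N)) (y : 'rV[F]_N)
  : nat :=
  \big[minn/nu]_(w : 'rV[F]_nu | psi w == y) hamw w.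

Definition parent_fun (nu N : nat) (Fam : {set 'rV[F]_N})
  (phi : 'Hom('rV[F]_nu, 'rV[F]_N)) : Prop :=
  (forall i : 'I_nu, exists2 v, v \in Fam & <[phi (delta_mx ord0 i)]>%VS = <[v]>%VS) /\
  (forall v, v \in Fam -> exists i : 'I_nu, <[phi (delta_mx ord0 i)]>%VS = <[v]>%VS).

Definition lin_isometric (N : nat) (wt1 wt2 : 'rV[F]_N -> nat) : Prop :=
  exists L : 'End('rV[F]_N), lker L = 0%VS /\ forall x, wt1 x = wt2 (L x).

Definition hamming_equiv (nu : nat) (C1 C2 : {vspace 'rV[F]_nu}) : Prop :=
  exists L : 'End('rV[F]_nu), (forall w, hamw (L w) = hamw w) /\ (L @: C1)%VS = C2.

(* minimum Hamming distance >= 3 (vacuous for the zero subspace) *)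
Definition min_dist_ge3 (nu : nat) (C : {vspace 'rV[F]_nu}) : Prop :=
  forall w, w \in C -> w != 0 -> (3 <= hamw w)%N.

End Defs.

(* Main.v *)
Require Import Defs.
From HB Require Import structures.
From mathcomp Require Import all_boot all_order all_algebra.
Set Implicit Arguments. Unset Strict Implicit. Unset Printing Implicit Defensive.
Import GRing.Theory.
Local Open Scope ring_scope.

Lemma e_ord0 (F : finFieldType) n (i : 'I_n) : ('e_i : 'rV[F]_n) = delta_mx ord0 i.
Proof. by []. Qed.

Lemma bigmin_le (I : finType) (P : pred I) (G : I -> nat) d i :
  P i -> (\big[minn/d]_(j | P j) G j <= G i)%N.
Proof.
move=> Pi; have : i \in index_enum I by rewrite mem_index_enum.
elim: (index_enum I) => // a r IH; rewrite big_cons in_cons.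
case/orP=> [/eqP <-|/IH H]; first by rewrite Pi geq_minl.
by case: (P a) => //; rewrite geq_min H orbT.
Qed.

Lemma bigmin_led (I : finType) (P : pred I) (G : I -> nat) d :
  (\big[minn/d]_(j | P j) G j <= d)%N.
Proof. by elim/big_rec: _ => // i x _ H; rewrite geq_min H orbT. Qed.

Lemma leq_bigmin (I : finType) (P : pred I) (G : I -> nat) d k :
  (k <= d)%N -> (forall i, P i -> k <= G i)%N -> (k <= \big[minn/d]_(j | P j) G j)%N.
Proof. by move=> kd H; elim/big_ind: _ => // x y; rewrite leq_min => -> ->. Qed.

Lemma hom_sum (F : finFieldType) nu (V : vectType F) (phi : 'Hom('rV[F]_nu, V)) w :
  phi w = \sum_i w 0 i *: phi (delta_mx ord0 i).
Proof.
by rewrite {1}(row_sum_delta w) linear_sum; apply: eq_bigr => i _; rewrite linearZ.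
Qed.

Lemma hom_ext (F : finFieldType) nu (V : vectType F) (f g : 'Hom('rV[F]_nu, V)) :
  (forall i, f (delta_mx ord0 i) = g (delta_mx ord0 i)) -> forall w, f w = g w.
Proof.
by move=> H w; rewrite hom_sum [RHS]hom_sum; apply: eq_bigr => i _; rewrite H.
Qed.

Lemma hamw0 (F : finFieldType) nu (w : 'rV[F]_nu) : hamw w = 0%N -> w = 0.
Proof.
move/eqP; rewrite cards_eq0 => /eqP H; apply/rowP => i; rewrite mxE.
apply/eqP; apply: contraT => Hi.
have : i \in [set i | w 0 i != 0] by rewrite inE.
by rewrite H inE.
Qed.

Lemma hamw_le (F : finFieldType) nu (w : 'rV[F]_nu) : (hamw w <= nu)%N.
Proof. by rewrite /hamw; apply: leq_trans (max_card _) _; rewrite card_ord. Qed.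

Lemma quotwt_le (F : finFieldType) nu N (phiA : 'Hom('rV[F]_nu, 'rV[F]_N))
   (phiB : 'Hom('rV[F]_nu, 'rV[F]_N)) y z :
  (forall w, phiB w = z -> exists w', phiA w' = y /\ (hamw w' <= hamw w)%N) ->
  (quotwt phiA y <= quotwt phiB z)%N.
Proof.
move=> H; apply: leq_bigmin; first exact: bigmin_led.
move=> w /eqP /H [w' [Hw' Hle]]; apply: leq_trans Hle.
by apply: bigmin_le; rewrite Hw'.
Qed.

Lemma free2_notin (F : finFieldType) N (u v : 'rV[F]_N) :
  free [:: u; v] -> u \notin <[v]>%VS.
Proof. by rewrite free_cons span_seq1 => /andP[]. Qed.

Lemma parent_facts (F : finFieldType) N nu (Fam : {set 'rV[F]_N})
    (phi : 'Hom('rV[F]_nu, 'rV[F]_N)) :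
  spanning_ppf Fam -> #|Fam| = nu -> parent_fun Fam phi ->
  exists f : 'I_nu -> 'rV[F]_N,
   [/\ forall i, f i \in Fam, forall i, <[phi (delta_mx ord0 i)]>%VS = <[f i]>%VS,
       injective f & forall v, v \in Fam -> exists i, v = f i].
Proof.
move=> [[Hnz Hfree] Hspan] Hcard [H1 H2].
have : forall i, exists v, v \in Fam /\ <[phi (delta_mx ord0 i)]>%VS = <[v]>%VS.
  by move=> i; have [v ? ?] := H1 i; exists v.
case/fin_all_exists => f Hf.
have Hsurj : forall v, v \in Fam -> exists i, v = f i.
  move=> v vF; have [i Hi] := H2 v vF; exists i.
  apply/eqP; apply: contraT => Hne.
  have /free2_notin := Hfree _ _ vF (proj1 (Hf i)) Hne.
  by rewrite -(proj2 (Hf i)) Hi memv_line.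
exists f; split => //; try by move=> i; case: (Hf i).
have sub : Fam \subset [set f i | i in 'I_nu].
  by apply/subsetP => v /Hsurj [i ->]; apply: imset_f.
have : #|[set f i | i in 'I_nu]| == #|'I_nu|.
  rewrite eqn_leq leq_imset_card /= card_ord -{1}Hcard.
  exact: subset_leq_card sub.
by move/imset_injP => Hinj x y Hxy; apply: Hinj.
Qed.

Lemma parent_nz (F : finFieldType) N nu (Fam : {set 'rV[F]_N})
    (phi : 'Hom('rV[F]_nu, 'rV[F]_N)) i :
  spanning_ppf Fam -> #|Fam| = nu -> parent_fun Fam phi ->
  phi (delta_mx ord0 i) != 0.
Proof.
move=> Hs Hc Hp; have [f [fF fl finj fs]] := parent_facts Hs Hc Hp.
have := dim_vline (phi (delta_mx ord0 i)); rewrite fl dim_vline.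
move: Hs => [[Hnz _] _]; rewrite (Hnz _ (fF i)).
by case: (_ != 0).
Qed.

Lemma parent_indep (F : finFieldType) N nu (Fam : {set 'rV[F]_N})
    (phi : 'Hom('rV[F]_nu, 'rV[F]_N)) i j :
  spanning_ppf Fam -> #|Fam| = nu -> parent_fun Fam phi -> i != j ->
  phi (delta_mx ord0 i) \notin <[phi (delta_mx ord0 j)]>%VS.
Proof.
move=> Hs Hc Hp ij; have [f [fF fl finj fs]] := parent_facts Hs Hc Hp.
rewrite memvE !fl -memvE; apply: free2_notin.
move: Hs => [[_ Hfree] _]; apply: Hfree => //.
by apply: contra ij => /eqP /finj ->.
Qed.

Lemma parent_onto (F : finFieldType) N nu (Fam : {set 'rV[F]_N})
    (phi : 'Hom('rV[F]_nu, 'rV[F]_N)) :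
  spanning_ppf Fam -> #|Fam| = nu -> parent_fun Fam phi -> limg phi = fullv.
Proof.
move=> Hs Hc Hp; have [f [fF fl finj fs]] := parent_facts Hs Hc Hp.
apply/eqP; rewrite eqEsubv subvf /=.
move: Hs => [_ Hspan]; rewrite -Hspan; apply/span_subvP => v.
rewrite mem_enum => /fs [i ->].
have : f i \in <[phi (delta_mx ord0 i)]>%VS by rewrite fl memv_line.
rewrite memvE => H; rewrite memvE; apply: subv_trans H _.
by rewrite -memvE; apply: memv_img; apply: memvf.
Qed.

Lemma projwt_quot (F : finFieldType) N nu (Fam : {set 'rV[F]_N})
    (phi : 'Hom('rV[F]_nu, 'rV[F]_N)) x :
  spanning_ppf Fam -> #|Fam| = nu -> parent_fun Fam phi ->
  projwt Fam x = quotwt phi x.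
Proof.
move=> Hs Hc Hp; have [f [fF fl finj fs]] := parent_facts Hs Hc Hp.
apply/eqP; rewrite eqn_leq; apply/andP; split.
- apply: leq_bigmin; first by rewrite -Hc; apply: bigmin_led.
  move=> w /eqP Hw.
  pose S := [set i | w 0 i != 0]; pose I := [set f i | i in S].
  apply: (@leq_trans #|I|); last exact: leq_imset_card.
  apply: bigmin_le; apply/andP; split.
    by apply/subsetP => v /imsetP [i _ ->]; apply: fF.
  rewrite -Hw hom_sum; apply: memv_suml => i _.
  have [->|wi] := eqVneq (w 0 i) 0; first by rewrite scale0r mem0v.
  apply: memvZ; rewrite memvE fl -memvE; apply: memv_span.
  by rewrite mem_enum; apply: imset_f; rewrite inE.
- apply: leq_bigmin; first by rewrite Hc; apply: bigmin_led.
  move=> I /andP [sIF xI].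
  pose X := in_tuple (enum I).
  have xX : x \in <<X>>%VS by [].
  have HX : forall k : 'I_(size (enum I)), exists p : 'I_nu * F,
      X`_k = p.2 *: phi (delta_mx ord0 p.1).
    move=> k; have : X`_k \in Fam.
      by apply: (subsetP sIF); rewrite -mem_enum; apply: mem_nth.
    move=> /fs [j ->].
    have : f j \in <[phi (delta_mx ord0 j)]>%VS by rewrite memvE -fl -memvE memv_line.
    by case/vlineP => b ->; exists (j, b).
  have [g Hg] := fin_all_exists HX.
  pose a k := coord X k x.
  pose w := \sum_k (a k * (g k).2) *: (delta_mx ord0 (g k).1 : 'rV[F]_nu).
  have Hw : phi w = x.
    rewrite [RHS](coord_span xX) linear_sum; apply: eq_bigr => k _.
    by rewrite linearZ Hg scalerA.
  apply: (@leq_trans (hamw w)); first by apply: bigmin_le; rewrite Hw.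
  rewrite cardE -(card_ord (size (enum I))) /hamw.
  apply: (@leq_trans #|[set (g k).1 | k in 'I_(size (enum I))]|); last exact: leq_imset_card.
  apply: subset_leq_card; apply/subsetP => i; rewrite inE; apply: contraR => Hi.
  rewrite /w summxE big1 // => k _; rewrite !mxE.
  case: eqP => [_|]; last by rewrite mulr0.
  case: eqP => [Hk|]; last by rewrite mulr0.
  by case/negP: Hi; rewrite Hk; apply: imset_f.
Qed.

Lemma dim_fullv_rV (F : finFieldType) n : \dim (fullv : {vspace 'rV[F]_n}) = n.
Proof. by rewrite dimvf; move: (@dim_matrix F 1 n) => ->; apply: mul1r. Qed.

Lemma ker_dim (F : finFieldType) N nu (phi : 'Hom('rV[F]_nu, 'rV[F]_N)) :
  limg phi = fullv -> \dim (lker phi) = (nu - N)%N.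
Proof.
move=> H; have := limg_ker_dim phi fullv; rewrite capfv H.
rewrite (dim_fullv_rV F N) (dim_fullv_rV F nu).
by move=> E; rewrite -[in RHS]E addnK.
Qed.

Lemma supp0 (F : finFieldType) nu (w : 'rV[F]_nu) k :
  k \notin [set i | w 0 i != 0] -> w 0 k = 0.
Proof. by rewrite inE negbK => /eqP. Qed.

Lemma parent_mindist (F : finFieldType) N nu (Fam : {set 'rV[F]_N})
    (phi : 'Hom('rV[F]_nu, 'rV[F]_N)) :
  spanning_ppf Fam -> #|Fam| = nu -> parent_fun Fam phi -> min_dist_ge3 (lker phi).
Proof.
move=> Hs Hc Hp w; rewrite memv_ker hom_sum => /eqP Hsum wn0.
rewrite leqNgt; apply/negP => Hle.
have Hh : hamw w != 0%N by apply: contra wn0 => /eqP /hamw0 ->.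
have : (hamw w == 1)%N || (hamw w == 2)%N.
  by move: Hle Hh; case: (hamw w) => [|[|[|]]].
case/orP.
- case/cards1P => i Si.
  have wi : w 0 i != 0 by move: (set11 i); rewrite -Si inE.
  move: Hsum; rewrite (bigD1 i) //= big1 ?addr0 => [/eqP|k ki].
    by rewrite scaler_eq0 (negbTE wi) (negbTE (parent_nz i Hs Hc Hp)).
  by rewrite supp0 ?scale0r // Si inE.
- case/cards2P => i [j [ij Sij]].
  have wi : w 0 i != 0 by move: (set21 i j); rewrite -Sij inE.
  move: Hsum; rewrite (bigD1 i) //= (bigD1 j) /=; last by rewrite eq_sym.
  rewrite big1 ?addr0 => [H|k /andP[ki kj]].
    have := parent_indep Hs Hc Hp ij; apply/negP; rewrite negbK.
    apply/vlineP; exists (- w 0 j / w 0 i).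
    apply: (scalerI wi); rewrite scalerA mulrCA divff // mulr1.
    by rewrite scaleNr; apply/eqP; rewrite -addr_eq0 H.
  by rewrite supp0 ?scale0r // Sij !inE negb_or ki kj.
Qed.

Lemma mono_ham (F : finFieldType) nu (s : 'I_nu -> 'I_nu) (c : 'I_nu -> F) :
  injective s -> (forall i, c i != 0) ->
  exists M : 'End('rV[F]_nu), (forall w, hamw (M w) = hamw w) /\
    (forall i, M (delta_mx ord0 i) = c i *: delta_mx ord0 (s i)).
Proof.
move=> sinj cnz.
pose D : 'M[F]_nu := \matrix_(i, j) (if s i == j then c i else 0).
exists (linfun (mulmxr D)); split.
- move=> w; rewrite lfunE /= /hamw.
  have -> : [set j | (w *m D) 0 j != 0] = s @: [set i | w 0 i != 0].
    apply/setP => j; have [t st ts] := injF_bij sinj.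
    rewrite -[j]ts inE mem_imset // inE.
    rewrite !mxE (bigD1 (t j)) //= big1 ?addr0 => [|k kt].
      by rewrite mxE eqxx mulf_eq0 negb_or (cnz (t j)) andbT.
    by rewrite mxE (inj_eq sinj) (negbTE kt) mulr0.
  by rewrite card_imset.
- move=> i; rewrite lfunE /= -rowE; apply/rowP => j; rewrite !mxE.
  by rewrite eq_sym; case: eqP => _ /=; rewrite ?mulr1 ?mulr0.
Qed.

Lemma hamw_0 (F : finFieldType) nu : hamw (0 : 'rV[F]_nu) = 0%N.
Proof.
by rewrite /hamw; apply/eqP; rewrite cards_eq0; apply/eqP/setP => i; rewrite !inE mxE eqxx.
Qed.

Lemma ham_inj (F : finFieldType) nu (M : 'End('rV[F]_nu)) :
  (forall w, hamw (M w) = hamw w) -> lker M = 0%VS.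
Proof.
move=> HM; apply/eqP/lker0P => a b /eqP; rewrite -subr_eq0 -linearB => /eqP H.
by apply/eqP; rewrite -subr_eq0; apply/eqP; apply: hamw0; rewrite -HM H hamw_0.
Qed.

Lemma projwt_witness (F : finFieldType) N (Fam : {set 'rV[F]_N}) x k :
  spanning Fam -> (projwt Fam x <= k)%N ->
  exists I : {set 'rV[F]_N}, [/\ I \subset Fam, x \in <<enum I>>%VS & (#|I| <= k)%N].
Proof.
move=> Hsp Hle; case: (leqP #|Fam| k) => Hk.
  by exists Fam; split => //; rewrite Hsp memvf.
case: (boolP [exists I : {set 'rV[F]_N},
                 [&& I \subset Fam, x \in <<enum I>>%VS & (#|I| <= k)%N]]).
  by case/existsP => I /and3P [? ? ?]; exists I.
rewrite negb_exists => /forallP Hn.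
have : (k < projwt Fam x)%N.
  apply: leq_bigmin => // I /andP [sI xI]; move: (Hn I).
  by rewrite sI xI /= -ltnNge.
by rewrite ltnNge Hle.
Qed.

Lemma iso_to_ham (F : finFieldType) N nu (Fam1 Fam2 : {set 'rV[F]_N})
    (phi1 phi2 : 'Hom('rV[F]_nu, 'rV[F]_N)) :
  spanning_ppf Fam1 -> #|Fam1| = nu -> parent_fun Fam1 phi1 ->
  spanning_ppf Fam2 -> #|Fam2| = nu -> parent_fun Fam2 phi2 ->
  lin_isometric (projwt Fam1) (projwt Fam2) ->
  hamming_equiv (lker phi1) (lker phi2).
Proof.
move=> Hs1 Hc1 Hp1 Hs2 Hc2 Hp2 [L [HL Hiso]].
have [f1 [f1F f1l f1inj f1s]] := parent_facts Hs1 Hc1 Hp1.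
have [f2 [f2F f2l f2inj f2s]] := parent_facts Hs2 Hc2 Hp2.
have Linj : injective L by apply/lker0P; rewrite HL.
have LNZ : forall i, L (phi1 (delta_mx ord0 i)) != 0.
  move=> i; rewrite -(linear0 L); apply: contra (parent_nz i Hs1 Hc1 Hp1).
  by move/eqP/Linj => ->.
have Hst : forall i, exists p : 'I_nu * F,
    L (phi1 (delta_mx ord0 i)) = p.2 *: phi2 (delta_mx ord0 p.1).
  move=> i.
  have Hw1 : (projwt Fam1 (phi1 (delta_mx ord0 i)) <= 1)%N.
    apply: (@leq_trans #|[set f1 i]|); last by rewrite cards1.
    apply: bigmin_le.
    by rewrite sub1set f1F enum_set1 span_seq1 memvE f1l subvv.
  rewrite Hiso in Hw1.
  have [I [sI xI cI]] := projwt_witness (proj2 Hs2) Hw1.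
  move: cI; rewrite leq_eqVlt ltnS leqn0 cards_eq0; case/orP.
    case/cards1P => v Iv; move: xI; rewrite Iv enum_set1 span_seq1.
    have /f2s [j ->] : v \in Fam2 by rewrite -sub1set -Iv.
    rewrite memvE -f2l -memvE => /vlineP [b ->].
    by exists (j, b).
  move/eqP => I0; move: xI; rewrite I0 enum_set0 span_nil memv0 => H.
  by move: (LNZ i); rewrite H.
have [g Hg] := fin_all_exists Hst.
pose s i := (g i).1; pose c i := (g i).2.
have cnz : forall i, c i != 0.
  move=> i; apply: contra (LNZ i); rewrite Hg /c => /eqP ->; by rewrite scale0r.
have sinj : injective s.
  move=> i i' Hs; apply/eqP; apply: contraT => ii'.
  case/negP: (parent_indep Hs1 Hc1 Hp1 ii').
  apply/vlineP; exists (c i / c i'); apply: Linj.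
  have E := Hg i'; set y := phi1 (delta_mx ord0 i') in E *.
  rewrite (Hg i) linearZ /= E scalerA -/(s i) -/(c i) -/(s i') -/(c i') Hs.
  by rewrite mulfVK.
have [M [HM Me]] := mono_ham sinj cnz.
have Key : forall w, L (phi1 w) = phi2 (M w).
  move=> w; rewrite -!comp_lfunE; apply: hom_ext => i.
  by rewrite !comp_lfunE Me linearZ Hg.
exists M; split => //.
apply/eqP; rewrite eqEdim; apply/andP; split.
  apply/subvP => y /memv_imgP [w wK ->].
  by rewrite memv_ker -Key; move: wK; rewrite memv_ker => /eqP ->; rewrite linear0.
rewrite limg_dim_eq; last by rewrite (ham_inj HM) capv0.
by rewrite (ker_dim (parent_onto Hs1 Hc1 Hp1)) (ker_dim (parent_onto Hs2 Hc2 Hp2)).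
Qed.

Lemma ham_to_iso (F : finFieldType) N nu (Fam1 Fam2 : {set 'rV[F]_N})
    (phi1 phi2 : 'Hom('rV[F]_nu, 'rV[F]_N)) :
  spanning_ppf Fam1 -> #|Fam1| = nu -> parent_fun Fam1 phi1 ->
  spanning_ppf Fam2 -> #|Fam2| = nu -> parent_fun Fam2 phi2 ->
  hamming_equiv (lker phi1) (lker phi2) ->
  lin_isometric (projwt Fam1) (projwt Fam2).
Proof.
move=> Hs1 Hc1 Hp1 Hs2 Hc2 Hp2 [M [HM HMK]].
have MK0 := ham_inj HM.
have Minj : injective M by apply/lker0P; rewrite MK0.
have on1 := parent_onto Hs1 Hc1 Hp1.
pose L : 'End('rV[F]_N) := (phi2 \o M \o phi1^-1)%VF.
have inK2 : forall w, w \in lker phi1 -> M w \in lker phi2.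
  by move=> w wK; rewrite -HMK; apply: memv_img.
have Key : forall w, L (phi1 w) = phi2 (M w).
  move=> w; rewrite /L !comp_lfunE.
  set w' := (phi1^-1)%VF (phi1 w).
  have H1 : phi1 w' = phi1 w by rewrite /w' limg_lfunVK // on1 memvf.
  have : w' - w \in lker phi1 by rewrite memv_ker linearB /= H1 subrr.
  move/inK2; rewrite memv_ker !linearB /= subr_eq0 => /eqP ->.
  by [].
have Linj : injective L.
  suff H : forall w1 w2, L (phi1 w1) = L (phi1 w2) -> phi1 w1 = phi1 w2.
    move=> y1 y2.
    have E1 : y1 = phi1 ((phi1^-1)%VF y1) by rewrite limg_lfunVK // on1 memvf.
    have E2 : y2 = phi1 ((phi1^-1)%VF y2) by rewrite limg_lfunVK // on1 memvf.
    by rewrite E1 E2; apply: H.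
  move=> w1 w2; rewrite !Key => /eqP; rewrite -subr_eq0 -!linearB /= -memv_ker -HMK.
  case/memv_imgP => v vK /Minj Hv.
  by apply/eqP; rewrite -subr_eq0 -linearB /= -memv_ker Hv.
exists L; split; first by apply/eqP/lker0P.
move=> x; rewrite (projwt_quot x Hs1 Hc1 Hp1) (projwt_quot (L x) Hs2 Hc2 Hp2).
apply/eqP; rewrite eqn_leq; apply/andP; split; apply: quotwt_le => w Hw.
- have : w \in limg M by rewrite lker0_limgf ?MK0 // memvf.
  case/memv_imgP => w' _ Ew; exists w'; split; last by rewrite Ew HM.
  by apply: Linj; rewrite Key -Ew.
- by exists (M w); rewrite HM -Key Hw.
Qed.

Lemma id_iso (F : finFieldType) N (wt : 'rV[F]_N -> nat) : lin_isometric wt wt.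
Proof.
exists \1%VF; split; last by move=> x; rewrite id_lfunE.
by apply/eqP/lker0P => a b; rewrite !id_lfunE.
Qed.

Lemma parent_exists (F : finFieldType) N nu (Fam : {set 'rV[F]_N}) :
  #|Fam| = nu -> exists phi : 'Hom('rV[F]_nu, 'rV[F]_N), parent_fun Fam phi.
Proof.
move=> Hc; pose X := enum Fam.
have sX : size X = nu by rewrite -Hc cardE.
pose A : 'M[F]_(nu, N) := \matrix_(i < nu) (X`_i : 'rV[F]_N).
exists (linfun (mulmxr A)).
have Ee : forall i : 'I_nu, linfun (mulmxr A) (delta_mx ord0 i) = X`_i.
  by move=> i; rewrite lfunE /= -rowE rowK.
split.
- move=> i; exists X`_i; last by rewrite Ee.
  by rewrite -mem_enum mem_nth // sX.
- move=> v vF.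
  have Hi : (index v X < nu)%N by rewrite -sX index_mem mem_enum.
  by exists (Ordinal Hi); rewrite Ee /= nth_index // mem_enum.
Qed.

Lemma hamw_supp (F : finFieldType) nu (w : 'rV[F]_nu) (S : {set 'I_nu}) :
  (forall k, k \notin S -> w 0 k = 0) -> (hamw w <= #|S|)%N.
Proof.
move=> H; apply: subset_leq_card; apply/subsetP => k; rewrite inE.
by apply: contraR => /H ->.
Qed.

Lemma part4 (F : finFieldType) N nu (hNnu : (N <= nu)%N)
    (P : {vspace 'rV[F]_nu}) (phiP : 'Hom('rV[F]_nu, 'rV[F]_N)) :
  \dim P = (nu - N)%N -> min_dist_ge3 P -> lker phiP = P ->
  exists Fam : {set 'rV[F]_N},
    [/\ spanning_ppf Fam, #|Fam| = nu, lin_isometric (quotwt phiP) (projwt Fam)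
      & parent_fun Fam phiP].
Proof.
move=> HdP Hmd HK.
pose u i := phiP (delta_mx ord0 i : 'rV[F]_nu).
have unz : forall i, u i != 0.
  move=> i; apply/negP => /eqP H.
  have : (delta_mx ord0 i : 'rV[F]_nu) \in P by rewrite -HK memv_ker; apply/eqP.
  have en0 : (delta_mx ord0 i : 'rV[F]_nu) != 0.
    apply/negP => /eqP /rowP /(_ i); rewrite !mxE eqxx /=.
    by move/eqP; rewrite oner_eq0.
  move/Hmd => /(_ en0).
  suff : (hamw (delta_mx ord0 i : 'rV[F]_nu) <= #|[set i]|)%N.
    by rewrite cards1 => H1 H2; have := leq_trans H2 H1.
  by apply: hamw_supp => k; rewrite inE => ki; rewrite mxE eq_sym (negbTE ki) andbF.
have uind : forall i j, i != j -> u i \notin <[u j]>%VS.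
  move=> i j ij; apply/negP => /vlineP [a Ha].
  pose w : 'rV[F]_nu := delta_mx ord0 i - a *: delta_mx ord0 j.
  have wP : w \in P by rewrite -HK memv_ker linearB linearZ /= -/(u i) -/(u j) Ha subrr.
  have wn0 : w != 0.
    apply/negP => /eqP /rowP /(_ i); rewrite !mxE eqxx (negbTE ij) /= mulr0 subr0.
    by move/eqP; rewrite oner_eq0.
  have := Hmd w wP wn0; apply/negP; rewrite -ltnNge ltnS.
  apply: leq_trans (hamw_supp (S := [set i; j]) _) _; last by rewrite cards2; case: (i != j).
  move=> k; rewrite !inE negb_or => /andP [ki kj].
  by rewrite !mxE (negbTE ki) (negbTE kj) andbF mulr0 subr0.
have uinj : injective u.
  move=> i j Hij; apply/eqP; apply: contraT => ij.
  by move: (uind i j ij); rewrite Hij memv_line.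
pose Fam := [set u i | i : 'I_nu].
have HFc : #|Fam| = nu by rewrite card_imset // card_ord.
have onto : limg phiP = fullv.
  apply/eqP; rewrite eqEdim subvf /= dim_fullv_rV.
  have := limg_ker_dim phiP fullv; rewrite capfv HK HdP dim_fullv_rV.
  by move=> E; rewrite -(leq_add2l (nu - N)) E subnK.
have Hpar : parent_fun Fam phiP.
  split; first by move=> i; exists (u i) => //; apply: imset_f.
  by move=> v /imsetP [i _ ->]; exists i.
have Hsp : spanning_ppf Fam.
  split; last first.
    apply/eqP; rewrite eqEsubv subvf /=; apply/subvP => y _.
    have : y \in limg phiP by rewrite onto memvf.
    case/memv_imgP => w _ ->; rewrite hom_sum; apply: memv_suml => i _.
    by apply: memvZ; apply: memv_span; rewrite mem_enum; apply: imset_f.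
  split; first by move=> v /imsetP [i _ ->].
  move=> a b /imsetP [i _ ->] /imsetP [j _ ->] Hne.
  rewrite free_cons span_seq1 seq1_free unz andbT uind //.
  by apply: contra Hne => /eqP ->.
exists Fam; split => //.
have [L [HL HLx]] := id_iso (projwt Fam).
exists \1%VF; split; first by apply/eqP/lker0P => a b; rewrite !id_lfunE.
by move=> x; rewrite id_lfunE (projwt_quot x Hsp HFc Hpar).
Qed.

Unset Implicit Arguments. Set Strict Implicit. Set Printing Implicit Defensive.

Theorem proposition4p2 (F : finFieldType) (N nu : nat) (hNnu : (N <= nu)%N) :
  (* every spanning projective point family of size nu has a parent function *)
  (forall Fam : {set 'rV[F]_N}, spanning_ppf Fam -> #|Fam| = nu ->
     exists phi : 'Hom('rV[F]_nu, 'rV[F]_N), parent_fun Fam phi) /\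
  (* parent codes lie in Gr_{nu-N}(F^nu)_{d_H >= 3} *)
  (forall (Fam : {set 'rV[F]_N}) (phi : 'Hom('rV[F]_nu, 'rV[F]_N)),
     spanning_ppf Fam -> #|Fam| = nu -> parent_fun Fam phi ->
     \dim (lker phi) = (nu - N)%N /\ min_dist_ge3 (lker phi)) /\
  (* Psi is well defined (=>) and injective (<=) *)
  (forall (Fam1 Fam2 : {set 'rV[F]_N}) (phi1 phi2 : 'Hom('rV[F]_nu, 'rV[F]_N)),
     spanning_ppf Fam1 -> #|Fam1| = nu -> parent_fun Fam1 phi1 ->
     spanning_ppf Fam2 -> #|Fam2| = nu -> parent_fun Fam2 phi2 ->
     (lin_isometric (projwt Fam1) (projwt Fam2) <->
      hamming_equiv (lker phi1) (lker phi2))) /\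
  (* surjectivity, with inverse [P] |-> [wt_quot, phi_P] for any phi_P with kernel P *)
  (forall (P : {vspace 'rV[F]_nu}) (phiP : 'Hom('rV[F]_nu, 'rV[F]_N)),
     \dim P = (nu - N)%N -> min_dist_ge3 P -> lker phiP = P ->
     exists Fam : {set 'rV[F]_N},
       [/\ spanning_ppf Fam, #|Fam| = nu,
           lin_isometric (quotwt phiP) (projwt Fam) &
           forall phi : 'Hom('rV[F]_nu, 'rV[F]_N), parent_fun Fam phi ->
             hamming_equiv (lker phi) P]).
Proof.
split; first by move=> Fam _ Hc; apply: parent_exists.
split.
  move=> Fam phi Hs Hc Hp; split; first exact: ker_dim (parent_onto Hs Hc Hp).
  exact: parent_mindist Hs Hc Hp.
split.
  move=> Fam1 Fam2 phi1 phi2 Hs1 Hc1 Hp1 Hs2 Hc2 Hp2; split.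
    exact: iso_to_ham.
  exact: ham_to_iso.
move=> P phiP HdP Hmd HK.
have [Fam [Hs Hc Hiso Hpar]] := part4 hNnu HdP Hmd HK.
exists Fam; split => // phi Hp; rewrite -HK.
exact: (iso_to_ham Hs Hc Hp Hs Hc Hpar (id_iso _)).
Qed.
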